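(* Consider the NWLA-CuSum stopping time $\overline{\tau}(b)$ with window size $w$ as defined in the context. For any $w>0$ and any $b>0$, $\mathbb{E}_\infty[\overline{\tau}(b)]\ge e^b$. Consequently, $\overline{\tau}(\overline{b}_\alpha)\in\mathcal{C}_\alpha$ if $\overline{b}_\alpha=|\log\alpha|$.
   Context: Let $X_1,X_2,\dots\in\mathbb{R}^d$ be independent with an unknown change-point $\nu$: before $\nu$ the density is the known $p_0$, from $\nu$ on it is $p_1$ (w.r.t. a dominating measure $\mu$). $\mathbb{P}_\infty,\mathbb{E}_\infty$ denote probability/expectation when no change occurs (all observations have density $p_0$). $\mathcal{C}_\alpha:=\{\tau:1/\mathbb{E}_\infty[\tau]\le\alpha\}$. A fixed density estimation procedure maps a finite collection of observations to a density w.r.t. $\mu$; for a positive integer $w$ and $n>w$, $\widehat{p}^w_n$ is its output on $X_{n-w},\dots,X_{n-1}$. Let $\widehat{Z}^w_n:=\log(\widehat{p}^w_n(X_n)/p_0(X_n))$ for $n>w$; the NWLA-CuSum statistic is $\overline{W}(1)=\dots=\overline{W}(w)=0$, $\overline{W}(n)=(\overline{W}(n-1))^++\widehat{Z}^w_n$ for $n>w$, and $\overline{\tau}(b):=\inf\{n>w:\overline{W}(n)\ge b\}$. *)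

(* Defs.v *)
From HB Require Import structures.
From mathcomp Require Import all_boot all_order all_algebra.
From mathcomp Require Import all_classical all_reals all_analysis.
Set Implicit Arguments. Unset Strict Implicit. Unset Printing Implicit Defensive.
Import Order.TTheory GRing.Theory Num.Theory.
Local Open Scope classical_set_scope.
Local Open Scope ring_scope.

Section nwla.
Context {R : realType} {dO : measure_display} {Omega : measurableType dO}.
Context {dT : measure_display} {T : measurableType dT}.

Definition mutually_independent (P : probability Omega R)
    (X : nat -> Omega -> T) (I : set nat) : Prop :=
  forall (s : seq nat) (A : nat -> set T),
    uniq s -> {subset s <= I} -> (forall i, measurable (A i)) ->
    P (\bigcap_(i in [set` s]) (X i @^-1` A i)) =
    ((\prod_(i <- s) fine (P (X i @^-1` A i)))%:E)%E.

Definition is_density (mu : {measure set T -> \bar R}) (f : T -> R) : Prop :=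
  [/\ measurable_fun setT f, forall x, 0 <= f x &
      (\int[mu]_x (f x)%:E = 1)%E].

Variables (w : nat) (est : w.-tuple T -> T -> R) (p0 : T -> R)
  (X : nat -> Omega -> T).

Definition window (n : nat) (om : Omega) : w.-tuple T :=
  [tuple X (n - w + i)%N om | i < w].

Definition Zhat (n : nat) (om : Omega) : \bar R :=
  let ph := est (window n om) (X n om) in
  let q := p0 (X n om) in
  if ph == 0 then -oo%E else if q == 0 then +oo%E else (ln (ph / q))%:E.

(* NWLA-CuSum statistic: W(1) = ... = W(w) = 0,
   W(n) = (W(n-1))^+ + Zhat n for n > w. (W 0 is an unused 0.) *)
Fixpoint Wbar (n : nat) (om : Omega) : \bar R :=
  match n with
  | 0 => 0%E
  | m.+1 => if (m.+1 <= w)%N then 0%E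
            else (maxe (Wbar m om) 0 + Zhat m.+1 om)%E
  end.

(* tau(b) = inf { n > w : W(n) >= b }  (inf of the empty set = +oo) *)
Definition taubar (b : R) (om : Omega) : \bar R :=
  ereal_inf [set (n%:R)%:E | n in [set n | (w < n)%N /\ (b%:E <= Wbar n om)%E]].

End nwla.

Definition E_infty {R : realType} {dO : measure_display}
  {Omega : measurableType dO} (P : probability Omega R) (tau : Omega -> \bar R)
  : \bar R := (\int[P]_om tau om)%E.

Definition in_C_alpha {R : realType} {dO : measure_display}
  {Omega : measurableType dO} (P : probability Omega R) (alpha : R)
  (tau : Omega -> \bar R) : Prop :=
  ((E_infty P tau)^-1 <= alpha%:E)%E.

(* Main.v *)
Require Import Defs.
From HB Require Import structures.
From mathcomp Require Import all_boot all_order all_algebra.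
From mathcomp Require Import all_classical all_reals all_analysis.
From mathcomp Require Import measurable_realfun.
From mathcomp Require Import zify ring lra.
Set Implicit Arguments. Unset Strict Implicit. Unset Printing Implicit Defensive.
Import Order.TTheory GRing.Theory Num.Theory.
Local Open Scope classical_set_scope.
Local Open Scope ring_scope.

Section cov.
Local Open Scope ereal_scope.
Context {R : realType} {dT : measure_display} {T : measurableType dT}.
Variables (mu nu : {measure set T -> \bar R}) (p0 : T -> R).
Hypothesis mp0 : measurable_fun setT p0.
Hypothesis p00 : forall x, (0 <= p0 x)%R.
Hypothesis nuE : forall A, measurable A -> nu A = \int[mu]_(x in A) (p0 x)%:E.

Import HBNNSimple.

Lemma cov (f : T -> \bar R) : measurable_fun setT f -> (forall x, 0 <= f x) ->
  \int[nu]_x f x = \int[mu]_x (f x * (p0 x)%:E).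
Proof.
move=> mf f0; set g := fun x => (p0 x)%:E.
have mg : measurable_fun setT g by apply/measurable_EFinP.
have g0 : forall x, 0 <= g x by move=> x; rewrite lee_fin.
pose h := nnsfun_approx measurableT mf.
have -> : \int[nu]_x f x = lim (\int[nu]_x (EFin \o h n) x @[n --> \oo]).
  have fE x : f x = lim ((EFin \o h n) x @[n --> \oo]).
    by apply/esym/cvg_lim => //; exact: cvg_nnsfun_approx.
  under eq_integral => x _ do rewrite fE.
  apply: monotone_convergence => //.
  - by move=> n; apply/measurable_EFinP; exact/measurable_funP.
  - by move=> n x _ //=; rewrite lee_fin.
  - by move=> x _ a b ab; rewrite lee_fin; exact/lefP/nd_nnsfun_approx.
have -> : \int[mu]_x (f x * g x) =
    lim (\int[mu]_x ((EFin \o h n) x * g x) @[n --> \oo]).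
  have fg x : f x * g x = lim (((EFin \o h n) \* g) x @[n --> \oo]).
    by apply/esym/cvg_lim => //; apply: cvgeZr => //; exact: cvg_nnsfun_approx.
  under eq_integral => x _ do rewrite fg.
  apply: monotone_convergence => [//| | |].
  - move=> n; apply/emeasurable_funM => //.
    exact/measurable_EFinP.
  - by move=> n x _ /=; rewrite mule_ge0 ?lee_fin.
  - by move=> x _ a b ab/=; rewrite lee_wpmul2r ?lee_fin//; exact/lefP/nd_nnsfun_approx.
suff suf : (fun n => \int[mu]_x ((EFin \o h n) x * g x)) =
    (fun n => \int[nu]_x (EFin \o h n) x) by rewrite suf.
apply/funext => n.
transitivity (\int[nu]_x
   (\sum_(y \in range (h n)) (y * \1_(h n @^-1` [set y]) x)%:E)); last first.
  by apply: eq_integral => t _; rewrite /= fimfunE -fsumEFin.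
have indich m r : measurable_fun setT (fun x => (r * \1_(h m @^-1` [set r]) x)%:E).
  by apply: (measurable_comp measurableT) => //; exact: measurable_funM.
rewrite ge0_integral_fsum//; last by move=> m y _; exact: nnfun_muleindic_ge0.
transitivity (\int[mu]_x (\sum_(y \in range (h n))
    (y * \1_(h n @^-1` [set y]) x)%:E * g x)).
  under [RHS]eq_integral => x xE.
    rewrite -ge0_mule_fsuml => [|y]; last exact: nnfun_muleindic_ge0.
    rewrite fsumEFin // -(fimfunE _ x); over.
  by [].
rewrite ge0_integral_fsum//; last 2 first.
  - by move=> y; apply: emeasurable_funM => //.
  - by move=> m y _; rewrite mule_ge0 ?nnfun_muleindic_ge0.
apply: eq_fsbigr => r rhn.
under [RHS]eq_integral do rewrite EFinM.
rewrite integralZl_indic_nnsfun => //.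
under eq_integral do rewrite EFinM -muleA.
rewrite ge0_integralZl//.
- under eq_integral do rewrite muleC.
  rewrite (eq_integral (g \_ (h n @^-1` [set r]))); last first.
    by move=> x xE; rewrite epatch_indic.
  rewrite -integral_mkcondr integral_indic ?setIT // nuE ?setTI //.
- apply: emeasurable_funM => //; apply/measurable_EFinP; exact: measurable_indic.
- by move=> t _; rewrite mule_ge0 ?lee_fin.
- by move: rhn; rewrite inE => -[t _ <-]; rewrite lee_fin.
Qed.

End cov.

Lemma mfun_eq0 {R : realType} d (T : measurableType d) (f : T -> R) :
  measurable_fun setT f -> measurable_fun setT (fun x => f x == 0).
Proof.
move=> mf; apply: (measurable_fun_bool true).
rewrite (_ : _ @^-1` _ = f @^-1` [set 0]); first exact: mf.
by apply/seteqP; split => x /= /eqP.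
Qed.


Lemma le_int_nm d (T : measurableType d) (R : realType)
  (mu : {measure set T -> \bar R}) (f h : T -> \bar R) :
  (forall x, (0 <= f x)%E) -> (forall x, (f x <= h x)%E) ->
  (\int[mu]_x f x <= \int[mu]_x h x)%E.
Proof.
move=> f0 fh; have h0 : forall x, (0 <= h x)%E.
  by move=> x; apply: le_trans (fh x).
rewrite !ge0_integralTE //; apply: ereal_sup_le => _ [g gf <-].
by exists g => // x; apply: le_trans (gf x) (fh x).
Qed.

Lemma eqle {R : realType} (x y : \bar R) : x = y -> (x <= y)%E.
Proof. by move->. Qed.

Definition mkmf d1 d2 (T1 : measurableType d1) (T2 : measurableType d2)
  (f : T1 -> T2) (mf : measurable_fun setT f) : {mfun T1 >-> T2} :=
  HB.pack f (isMeasurableFun.Build _ _ _ _ f mf).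

Section main.
Context {R : realType} {dO : measure_display} {Omega : measurableType dO}.
Variable P : probability Omega R.
Context {dT : measure_display} {T : measurableType dT}.
Variable mu : {measure set T -> \bar R}.
Variables (w : nat) (est : w.-tuple T -> T -> R) (p0 : T -> R)
  (X : nat -> Omega -> T).
Hypothesis mX : forall n, measurable_fun setT (X n).
Hypothesis indep : mutually_independent P X [set n | (0 < n)%N].
Hypothesis mp0 : measurable_fun setT p0.
Hypothesis mest : measurable_fun setT (fun z : w.-tuple T * T => est z.1 z.2).
Hypothesis p0_ge0 : forall x, 0 <= p0 x.
Hypothesis est_ge0 : forall y x, 0 <= est y x.
Hypothesis mesty : forall y, measurable_fun setT (est y).
Hypothesis est_int : forall y, (\int[mu]_x (est y x)%:E = 1)%E.
Hypothesis lawX : forall n A, (0 < n)%N -> measurable A ->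
  P (X n @^-1` A) = (\int[mu]_(x in A) (p0 x)%:E)%E.

Definition Gk (k : nat) : set (set Omega) :=
  [set A | exists (s : seq nat) (B : nat -> set T),
     [/\ uniq s, all (fun i => 0 < i <= k)%N s, (forall i, measurable (B i)) &
       A = \bigcap_(i in [set` s]) X i @^-1` B i]].

Definition Ok k := g_sigma_algebraType (Gk k).

Lemma Gk_setI k : setI_closed (Gk k).
Proof.
move=> A B [s1 [B1 [u1 a1 m1 ->]]] [s2 [B2 [u2 a2 m2 ->]]].
exists (undup (s1 ++ s2)), (fun i => (if i \in s1 then B1 i else setT) `&`
   (if i \in s2 then B2 i else setT)); split.
- exact: undup_uniq.
- apply/allP => i; rewrite mem_undup mem_cat => /orP[] ?.
  + by move/allP: a1; apply.
  + by move/allP: a2; apply.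
- by move=> i; apply: measurableI; case: ifP.
- apply/seteqP; split => om /=.
  + move=> [H1 H2] i; rewrite /= mem_undup mem_cat => _.
    by split; case: ifP => // Hi; [exact: H1|exact: H2].
  + move=> H; split => i /= Hi; have {}Hi : i \in _ := Hi.
    * have := H i; rewrite /= mem_undup mem_cat Hi /= => /(_ isT) [].
      by [].
    * have := H i; rewrite /= mem_undup mem_cat Hi orbT => /(_ isT) [_].
      by [].
Qed.

Lemma Gk_meas k A : Gk k A -> measurable A.
Proof.
move=> [s [B [_ _ mB ->]]]; apply: bigcap_measurableType => i _.
by rewrite -[X in measurable X]setTI; apply: mX.
Qed.

Lemma sGk_meas k A : <<s Gk k >> A -> measurable A.
Proof.
apply: smallest_sub; first exact: sigma_algebra_measurable.
by move=> B; apply: Gk_meas.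
Qed.

Lemma XOk k i : (0 < i <= k)%N -> measurable_fun (T := Ok k) setT (X i).
Proof.
move=> ik _ B mB; rewrite setTI; apply: sub_sigma_algebra.
exists [:: i], (fun _ => B); split => //=; first by rewrite ik.
apply/seteqP; split => om /=.
- by move=> H j; rewrite /= inE => /eqP ->.
- by move=> H; apply: (H i); rewrite /= inE.
Qed.

Lemma Ok_meas_fun k dY (Y : measurableType dY) (f : Omega -> Y) :
  measurable_fun (T := Ok k) setT f -> measurable_fun setT f.
Proof. by move=> mf _ B mB; apply: (@sGk_meas k); exact: mf. Qed.

Lemma Pfin (A : set Omega) : measurable A -> P A \is a fin_num.
Proof.
move=> mA; rewrite ge0_fin_numE ?measure_ge0 //.
by rewrite (le_lt_trans (probability_le1 _ mA)) ?ltry.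
Qed.


Local Open Scope ereal_scope.

Lemma indep_G n (E : set T) : (0 < n)%N -> measurable E ->
  forall A, Gk n.-1 A -> P (A `&` X n @^-1` E) = P A * P (X n @^-1` E).
Proof.
move=> n0 mE A [s [B [us als mB ->]]].
have nns : n \notin s.
  apply/negP => /(allP als) /andP[_]; rewrite leqNgt; move: n0; case: (n) => // m _; by rewrite /= ltnSn.
have sub1 : {subset s <= [set n | (0 < n)%N]}.
  by move=> i /(allP als) /andP[i0 _]; rewrite inE.
have mXE : measurable (X n @^-1` E).
  by rewrite -[X in measurable X]setTI; apply: mX.
pose B' := fun i => if i == n then E else B i.
have -> : \bigcap_(i in [set` s]) X i @^-1` B i `&` X n @^-1` E =
   \bigcap_(i in [set` (n :: s)]) X i @^-1` B' i.
  apply/seteqP; split => om /=.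
  - move=> [H1 H2] i; rewrite /= inE => /orP[/eqP ->|Hi].
    + by rewrite /B' eqxx.
    + rewrite /B'; case: eqP => [eqin|_]; last exact: H1.
      by move: nns; rewrite -eqin Hi.
  - move=> H; split.
    + move=> i /= Hi; have := H i; rewrite /= inE Hi orbT /B' => /(_ isT).
      case: eqP => // eqin; by move: nns; rewrite -eqin Hi.
    + by have := H n; rewrite /= inE eqxx /B' eqxx => /(_ isT).
have mB' : forall i, measurable (B' i) by move=> i; rewrite /B'; case: eqP.
rewrite (@indep (n :: s) B') //; last first.
  move=> i; rewrite inE => /orP[/eqP ->|/sub1//]; by rewrite inE.
  by rewrite /= nns us.
rewrite (@indep s B) // big_cons /B' eqxx -(fineK (Pfin mXE)) -EFinM.
congr EFin; rewrite mulrC /=; congr (_ * _)%R.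
apply: eq_big_seq => i Hi; case: eqP => // eqin; by move: nns; rewrite -eqin Hi.
Qed.

Lemma indep_sG n (E : set T) : (0 < n)%N -> measurable E ->
  forall A, <<s Gk n.-1 >> A -> P (A `&` X n @^-1` E) = P A * P (X n @^-1` E).
Proof.
move=> n0 mE.
have mXE : measurable (X n @^-1` E).
  by rewrite -[X in measurable X]setTI; apply: mX.
apply: (@dynkin_induction _ (Ok n.-1) (Gk n.-1)
  (fun A : set Omega => P (A `&` X n @^-1` E) = P A * P (X n @^-1` E))).
- by [].
- exact: Gk_setI.
- by rewrite setTI probability_setT mul1e.
- by move=> A GA; apply: indep_G.
- move=> S mS HS; have mS' : measurable (S : set Omega).
    apply: (sGk_meas (k:=n.-1)); exact: mS.
  have h1 : P (~` S `&` X n @^-1` E) = P (X n @^-1` E) - P (S `&` X n @^-1` E).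
    rewrite setIC -setDE measureD //; last first.
      by rewrite -ge0_fin_numE ?measure_ge0 // Pfin.
    by rewrite setIC.
  rewrite h1 HS probability_setC //.
  rewrite -(fineK (Pfin mS')) -(fineK (Pfin mXE)) -!EFinM -!EFinB.
  by congr EFin; rewrite mulrBl mul1r.
- move=> F mF tF HF.
  have mF' : forall k, measurable (F k : set Omega).
    by move=> k; apply: (sGk_meas (k:=n.-1)); exact: mF.
  have h2 : P (\bigcup_k F k `&` X n @^-1` E) =
      \sum_(0 <= i <oo) P (F i `&` X n @^-1` E).
    rewrite setI_bigcupl measure_bigcup //; last 2 first.
      by move=> i _; apply: measurableI.
      exact: trivIset_setIr.
    by apply: eq_eseriesl => i; rewrite in_setT.
  have h3 : P (\bigcup_k F k) = \sum_(0 <= i <oo) P (F i).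
    rewrite measure_bigcup //.
    by apply: eq_eseriesl => i; rewrite in_setT.
  rewrite h2 h3.
  under eq_eseriesr do rewrite HF.
  rewrite -(fineK (Pfin mXE)).
  under eq_eseriesr do rewrite muleC.
  rewrite nneseriesZl; first by rewrite muleC.
  by move=> i _; apply: measure_ge0.
Qed.







Local Close Scope ereal_scope.
Definition Zf (z : w.-tuple T * T) : \bar R :=
  if est z.1 z.2 == 0 then -oo%E else if p0 z.2 == 0 then +oo%E
  else (ln (est z.1 z.2) - ln (p0 z.2))%:E.

Definition Lf (z : w.-tuple T * T) : \bar R :=
  if est z.1 z.2 == 0 then 0%E else if p0 z.2 == 0 then +oo%E
  else (expR (ln (est z.1 z.2) - ln (p0 z.2)))%:E.

Local Open Scope ereal_scope.

Lemma LfE z : Lf z = expeR (Zf z).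
Proof. by rewrite /Lf /Zf; case: ifP => //; case: ifP. Qed.

Lemma mZf : measurable_fun setT Zf.
Proof.
have mq : measurable_fun setT (fun z : w.-tuple T * T => p0 z.2).
  exact: measurableT_comp.
apply: measurable_fun_ifT; first exact: mfun_eq0.
  exact: measurable_cst.
apply: measurable_fun_ifT; first exact: mfun_eq0.
  exact: measurable_cst.
apply/measurable_EFinP; apply: measurable_funB.
  by apply: measurableT_comp; [exact: measurable_ln|exact: mest].
by apply: measurableT_comp; [exact: measurable_ln|exact: mq].
Qed.

Lemma mLf : measurable_fun setT Lf.
Proof.
have mq : measurable_fun setT (fun z : w.-tuple T * T => p0 z.2).
  exact: measurableT_comp.
apply: measurable_fun_ifT; first exact: mfun_eq0.
  exact: measurable_cst.
apply: measurable_fun_ifT; first exact: mfun_eq0.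
  exact: measurable_cst.
apply/measurable_EFinP; apply: measurableT_comp; first exact: measurable_expR.
apply: measurable_funB.
  by apply: measurableT_comp; [exact: measurable_ln|exact: mest].
by apply: measurableT_comp; [exact: measurable_ln|exact: mq].
Qed.

Lemma ZhatE n om : Zhat est p0 X n om = Zf (window w X n om, X n om).
Proof.
rewrite /Zhat /Zf /=; case: ifPn => // /negbTE h1; case: ifPn => // h2.
have e0 : (0 < est (window w X n om) (X n om))%R.
  by rewrite lt_def (negbT h1) est_ge0.
have q0 : (0 < p0 (X n om))%R by rewrite lt_def h2 p0_ge0.
by rewrite lnM ?posrE ?invr_gt0 // lnV ?posrE.
Qed.

Definition Lw n om := Lf (window w X n om, X n om).

Lemma mwin k n : (w < n)%N -> (n <= k.+1)%N ->
  measurable_fun (T := Ok k) setT (window w X n).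
Proof.
move=> wn nk; apply/measurable_fun_tnthP => i.
rewrite (_ : _ \o _ = X (n - w + i)); last first.
  by apply/funext => om; rewrite /= /window tnth_mktuple.
apply: XOk; apply/andP; split.
  by rewrite addn_gt0 subn_gt0 wn.
have := ltn_ord i; move: wn nk; clear; lia.
Qed.

Lemma mXn k n : (0 < n <= k)%N -> measurable_fun (T := Ok k) setT (X n).
Proof. exact: XOk. Qed.

Lemma mZhat k n : (w < n <= k)%N ->
  measurable_fun (T := Ok k) setT (Zhat est p0 X n).
Proof.
move=> /andP[wn nk].
rewrite (_ : Zhat est p0 X n = Zf \o (fun om => (window w X n om, X n om))).
  apply: measurableT_comp; first exact: mZf.
  apply: measurable_fun_pair; first by apply: mwin => //; lia.
  by apply: mXn; apply/andP; split => //; lia.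
by apply/funext => om; rewrite ZhatE.
Qed.

Lemma mLw k n : (w < n <= k)%N -> measurable_fun (T := Ok k) setT (Lw n).
Proof.
move=> /andP[wn nk].
rewrite (_ : Lw n = Lf \o (fun om => (window w X n om, X n om))) //.
apply: measurableT_comp; first exact: mLf.
apply: measurable_fun_pair; first by apply: mwin => //; lia.
by apply: mXn; apply/andP; split => //; lia.
Qed.

Lemma mWbar k n : (n <= k)%N ->
  measurable_fun (T := Ok k) setT (Wbar est p0 X n).
Proof.
elim: n => [|n IH] nk; first exact: measurable_cst.
rewrite (_ : Wbar est p0 X n.+1 = fun om => Wbar est p0 X n.+1 om) //=.
case: (leqP n.+1 w) => hn; first exact: measurable_cst.
apply: emeasurable_funD.
  apply: measurable_maxe; first by apply: IH; lia.
  exact: measurable_cst.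
by apply: mZhat; rewrite hn.
Qed.

Fixpoint Rs (n : nat) (om : Omega) : \bar R :=
  match n with
  | 0 => 0
  | m.+1 => if (m.+1 <= w)%N then 0 else (1 + Rs m om) * Lw m.+1 om
  end.

Lemma mRs k n : (n <= k)%N -> measurable_fun (T := Ok k) setT (Rs n).
Proof.
elim: n => [|n IH] nk; first exact: measurable_cst.
rewrite (_ : Rs n.+1 = fun om => Rs n.+1 om) //=.
case: (leqP n.+1 w) => hn; first exact: measurable_cst.
apply: emeasurable_funM.
  apply: emeasurable_funD; first exact: measurable_cst.
  by apply: IH; lia.
by apply: mLw; rewrite hn.
Qed.

Variable b : R.

Fixpoint alive (n : nat) (om : Omega) : bool :=
  match n with
  | 0 => true
  | m.+1 => alive m om && ((m <= w)%N || (Wbar est p0 X m om < b%:E))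
  end.

Lemma malive k n : (n <= k.+1)%N -> measurable_fun (T := Ok k) setT (alive n).
Proof.
elim: n => [|n IH] nk; first exact: measurable_cst.
rewrite (_ : alive n.+1 = fun om => alive n.+1 om) //=.
apply: measurable_and; first by apply: IH; lia.
case: (n <= w)%N => /=; first exact: measurable_cst.
apply: measurable_fun_lte; last exact: measurable_cst.
by apply: mWbar; lia.
Qed.

Fixpoint Q (n : nat) (om : Omega) : \bar R :=
  match n with
  | 0 => 0
  | m.+1 => if alive m.+1 om then Rs m.+1 om else Q m om
  end.

Lemma mQ k n : (n <= k)%N -> measurable_fun (T := Ok k) setT (Q n).
Proof.
elim: n => [|n IH] nk; first exact: measurable_cst.
rewrite (_ : Q n.+1 = fun om => if alive n.+1 om then Rs n.+1 om else Q n om) //.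
apply: measurable_fun_ifT.
- by apply: malive; lia.
- exact: mRs.
- by apply: IH; lia.
Qed.


Local Open Scope ereal_scope.

Lemma Lf0 z : 0 <= Lf z.
Proof. by rewrite LfE expeR_ge0. Qed.

Lemma Lf_p0 y x : Lf (y, x) * (p0 x)%:E <= (est y x)%:E.
Proof.
rewrite /Lf /=; case: ifPn => [/eqP ->|e0]; first by rewrite mul0e.
case: ifPn => [/eqP ->|q0]; first by rewrite mule0 lee_fin est_ge0.
have e0' : (0 < est y x)%R by rewrite lt_def e0 est_ge0.
have q0' : (0 < p0 x)%R by rewrite lt_def q0 p0_ge0.
rewrite -EFinM expRB !lnK ?posrE // divfK //.
Qed.

Lemma inner n (y : w.-tuple T) (c : \bar R) : (0 < n)%N -> 0 <= c ->
  \int[distribution P (mkmf (mX n))]_x (c * Lf (y, x)) <= c.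
Proof.
move=> n0; case: c => [r| |] c0; last by move: c0; rewrite leNgt ltNye.
  2: by rewrite leey.
move: c0.
rewrite lee_fin => r0.
have mLy : measurable_fun setT (fun x => Lf (y, x)).
  apply: measurableT_comp; first exact: mLf.
  exact: measurable_fun_pair.
rewrite ge0_integralZl_EFin //; last by move=> x _; exact: Lf0.
rewrite -[X in _ <= X]mule1; apply: lee_wpmul2l; first by rewrite lee_fin.
rewrite (@cov _ _ _ mu _ p0 mp0 p0_ge0); last 3 first.
- by move=> A mA; exact: lawX.
- exact: mLy.
- by move=> x; exact: Lf0.
rewrite -(est_int y); apply: ge0_le_integral => //.
- by move=> x _; rewrite mule_ge0 ?Lf0 ?lee_fin.
- by apply: emeasurable_funM => //; apply/measurable_EFinP.
- by apply/measurable_EFinP.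
- by move=> x _; exact: Lf_p0.
Qed.

Lemma key n (g : Omega -> \bar R) : (w < n)%N -> (forall om, 0 <= g om) ->
  measurable_fun (T := Ok n.-1) setT g ->
  \int[P]_om (g om * Lw n om) <= \int[P]_om g om.
Proof.
move=> wn g0 mg'.
have n0 : (0 < n)%N by lia.
pose U := fun om => (g om, window w X n om).
have mU' : measurable_fun (T := Ok n.-1) setT U.
  apply: measurable_fun_pair => //; apply: mwin => //; lia.
have mU : measurable_fun setT U := Ok_meas_fun mU'.
have mPhi : measurable_fun setT (fun om => (U om, X n om)).
  exact: measurable_fun_pair.
pose lawU := distribution P (mkmf mU).
pose nu := distribution P (mkmf (mX n)).
pose F := fun z : (\bar R * w.-tuple T) * T => maxe z.1.1 0 * Lf (z.1.2, z.2).
have mF : measurable_fun setT F.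
  apply: emeasurable_funM.
    apply: measurable_maxe; last exact: measurable_cst.
    by apply: measurableT_comp; [exact: measurable_fst|exact: measurable_fst].
  apply: measurableT_comp; first exact: mLf.
  apply: measurable_fun_pair; last exact: measurable_snd.
  by apply: measurableT_comp; [exact: measurable_snd|exact: measurable_fst].
have F0 : forall z, 0 <= F z.
  by move=> z; rewrite mule_ge0 ?Lf0 // le_max lexx orbT.
have step1 : \int[P]_om (g om * Lw n om) =
    \int[distribution P (mkmf mPhi)]_z F z.
  rewrite ge0_integral_distribution //.
  by apply: eq_integral => om _; rewrite /F /= max_l ?g0.
have step2 : \int[distribution P (mkmf mPhi)]_z F z = \int[lawU \x nu]_z F z.
  apply: eq_measure_integral => A mA _; apply/esym.
  apply: product_measure_unique => // A1 B1 mA1 mB1.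
  transitivity (P (U @^-1` A1 `&` X n @^-1` B1)); first by [].
  have hU : <<s Gk n.-1 >> (U @^-1` A1).
    by have := mU' measurableT _ mA1; rewrite setTI.
  by rewrite (indep_sG n0 mB1 hU).
rewrite step1 step2 (fubini_tonelli1 F mF F0).
apply: (@le_trans _ _ (\int[lawU]_y maxe y.1 0)).
  apply: ge0_le_integral => //.
  - by move=> y _; apply: integral_ge0 => x _; exact: F0.
  - exact: measurable_fun_fubini_tonelli_F.
  - apply: measurable_maxe; last exact: measurable_cst.
    exact: measurable_fst.
  - move=> y _; rewrite /fubini_F /F /=; apply: inner => //.
    by rewrite le_max lexx orbT.
rewrite ge0_integral_distribution //; last 2 first.
- apply: measurable_maxe; last exact: measurable_cst.
  exact: measurable_fst.
- by move=> y; rewrite le_max lexx orbT.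
by rewrite le_eqVlt; apply/orP; left; apply/eqP/eq_integral => om _; rewrite /= max_l ?g0.
Qed.

Definition ind (bb : bool) : \bar R := if bb then 1 else 0.

Lemma ind_ge0 bb : 0 <= ind bb.
Proof. by case: bb => //=; rewrite lee01. Qed.

Lemma Rs_ge0 n om : 0 <= Rs n om.
Proof.
elim: n => [|n IH] //=; case: ifP => // _.
by rewrite mule_ge0 ?Lf0 // adde_ge0 // lee01.
Qed.

Lemma QS n om : Q n.+1 om = if alive n.+1 om then Rs n.+1 om else Q n om.
Proof. by []. Qed.

Lemma Q_ge0 n om : 0 <= Q n om.
Proof. by elim: n => [|n IH] //; rewrite QS; case: ifP => // _; exact: Rs_ge0. Qed.

Lemma alive_mono n om : alive n.+1 om -> alive n om.
Proof. by move=> /andP[]. Qed.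

Lemma alive_lt n om : alive n om ->
  forall m, (m < n)%N -> (w < m)%N -> Wbar est p0 X m om < b%:E.
Proof.
elim: n => [//|n IH] /= /andP[an h] m mn wm.
have [mn'|] := ltnP m n; first exact: IH.
move=> nm; have -> : m = n by lia.
by move: h; have -> : (n <= w)%N = false by lia.
Qed.

Lemma QE n om : alive n om -> Q n om = Rs n om.
Proof. by case: n => [//|n] /= ->. Qed.

Lemma WR n om : expeR (maxe (Wbar est p0 X n om) 0) <= 1 + Rs n om /\
  ((w < n)%N -> expeR (Wbar est p0 X n om) <= Rs n om).
Proof.
have base : expeR (maxe (0 : \bar R) 0) <= 1 + 0.
  by rewrite max_l // expeR0 adde0.
elim: n => [|n [IH1 IH2]] /=; first by split => // hw; exfalso; lia.
case: (leqP n.+1 w) => h; first by split => // hw; exfalso; lia.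
have key : expeR (maxe (Wbar est p0 X n om) 0 + Zhat est p0 X n.+1 om) <=
    (1 + Rs n om) * Lw n.+1 om.
  rewrite expeRD; apply: lee_pmul => //; first exact: expeR_ge0.
  - exact: expeR_ge0.
  - by rewrite ZhatE // /Lw LfE.
split; last by move=> _.
set W := maxe _ _ + _ in key *.
case: (leP 0 W) => hW.
- apply: le_trans key _; apply: lee_paddl; [exact: lee01|exact: lexx].
- rewrite expeR0; apply: lee_paddr; last exact: lexx.
  by rewrite mule_ge0 ?Lf0 // adde_ge0 ?Rs_ge0 // lee01.
Qed.

Lemma hitR n om : (w < n)%N -> b%:E <= Wbar est p0 X n om ->
  (expR b)%:E <= Rs n om.
Proof.
move=> wn hb; apply: le_trans (proj2 (WR n om) wn).
by rewrite -[X in X <= _]/(expeR b%:E) lee_expeR.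
Qed.

Lemma aliveS n om : alive n.+1 om =
  alive n om && ((n <= w)%N || (Wbar est p0 X n om < b%:E)).
Proof. by []. Qed.

Lemma P1 N om : (expR b)%:E <= Q N om + (expR b)%:E * ind (alive N.+1 om).
Proof.
elim: N => [|N IH]; first by rewrite /= /ind /= mule1 add0e.
rewrite /ind; case: ifPn => [_|na2]; first by rewrite mule1 lee_paddl // Q_ge0.
rewrite mule0 adde0 QS.
case: ifPn => a1.
- move: na2; rewrite aliveS a1 andTb negb_or => /andP[wN hb].
  by apply: hitR; [rewrite ltnNge | rewrite leNgt].
- by move: IH; rewrite /ind (negbTE a1) mule0 adde0.
Qed.

Lemma L1 n om : alive n om -> (n%:R)%:E <= taubar est p0 X b om.
Proof.
move=> an; apply: le_ereal_inf_tmp => _ [m [wm hm] <-].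
rewrite lee_fin ler_nat leqNgt; apply/negP => mn.
by have := alive_lt an mn wm; rewrite ltNge hm.
Qed.

Lemma tau_ge0 om : 0 <= taubar est p0 X b om.
Proof. by apply: le_trans (L1 (n := 0) _) => //. Qed.

Lemma P2 N om : \sum_(n < N) ind (alive n.+1 om) <= taubar est p0 X b om /\
  (alive N om -> \sum_(n < N) ind (alive n.+1 om) = (N%:R)%:E).
Proof.
elim: N => [|N [IH1 IH2]]; first by rewrite big_ord0; split => //; exact: tau_ge0.
rewrite big_ord_recr /= /ind; case: ifPn => aN1.
  rewrite IH2; last exact: alive_mono.
  have e : (N%:R)%:E + 1 = (N.+1%:R)%:E :> \bar R by rewrite -EFinD natr1.
  by rewrite e; split => [|_ //]; exact: L1.
by rewrite adde0; split => // aN; move: aN1; rewrite aN.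
Qed.

Lemma P3 N om : (N%:R)%:E * ind (alive N om) <= taubar est p0 X b om.
Proof.
rewrite /ind; case: ifPn => aN; first by rewrite mule1; exact: L1.
by rewrite mule0; exact: tau_ge0.
Qed.

Lemma RsS n om : Rs n.+1 om =
  if (n.+1 <= w)%N then 0 else (1 + Rs n om) * Lw n.+1 om.
Proof. by []. Qed.

Lemma mind k n : (n <= k.+1)%N ->
  measurable_fun (T := Ok k) setT (fun om => ind (alive n om)).
Proof.
move=> nk; rewrite /ind; apply: measurable_fun_ifT.
- exact: malive.
- exact: measurable_cst.
- exact: measurable_cst.
Qed.

Lemma EQ N : \int[P]_om Q N om <=
  \sum_(n < N) \int[P]_om ind (alive n.+1 om).
Proof.
elim: N => [|N IH]; first by rewrite big_ord0 integral0_eq.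
rewrite big_ord_recr.
have intA0 : 0 <= \int[P]_om ind (alive N.+1 om).
  by apply: integral_ge0 => om _; exact: ind_ge0.
have mQN : measurable_fun setT (Q N) by apply: (Ok_meas_fun (k := N)); exact: mQ.
have mQN1 : measurable_fun setT (Q N.+1).
  by apply: (Ok_meas_fun (k := N.+1)); exact: mQ.
have [Nw|wN] := leqP N.+1 w.
  apply: le_trans (leeD2r _ IH); apply: le_trans (leeDl _ intA0).
  apply: ge0_le_integral => //.
  - by move=> om _; exact: Q_ge0.
  - move=> om _; rewrite QS; case: ifP => _ //.
    by rewrite RsS Nw; exact: Q_ge0.
pose a := fun om => ind (alive N.+1 om).
pose A := fun om => if alive N.+1 om then 0 else Q N om.
pose g := fun om => a om * (1 + Rs N om).
have ma : measurable_fun setT a by apply: (Ok_meas_fun (k := N)); exact: mind.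
have mA : measurable_fun setT A.
  apply: measurable_fun_ifT => //.
  by apply: (Ok_meas_fun (k := N)); exact: malive.
have mRN : measurable_fun setT (Rs N) by apply: (Ok_meas_fun (k := N)); exact: mRs.
have mg' : measurable_fun (T := Ok N) setT g.
  apply: emeasurable_funM; first exact: mind.
  apply: emeasurable_funD; first exact: measurable_cst.
  exact: mRs.
have mg : measurable_fun setT g := Ok_meas_fun mg'.
have mL : measurable_fun setT (Lw N.+1).
  have hh : (w < N.+1 <= N.+1)%N by rewrite wN leqnn.
  exact: Ok_meas_fun (mLw hh).
have g0 : forall om, 0 <= g om.
  by move=> om; rewrite mule_ge0 ?ind_ge0 // adde_ge0 ?lee01 ?Rs_ge0.
have A0 : forall om, 0 <= A om.
  by move=> om; rewrite /A; case: ifP => _ //; exact: Q_ge0.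
have eQ : forall om, Q N.+1 om = A om + g om * Lw N.+1 om.
  move=> om; rewrite QS /A /g /a /ind; case: ifP => _.
  - by rewrite add0e mul1e RsS leqNgt wN.
  - by rewrite !mul0e adde0.
under eq_integral => om _ do rewrite eQ.
rewrite ge0_integralD //; try (by move=> om _; rewrite mule_ge0 ?g0 ?Lf0);
  try (exact: emeasurable_funM).
apply: le_trans (leeD2l _ (key wN g0 mg')) _.
have eg : \int[P]_om g om = \int[P]_om a om + \int[P]_om (a om * Rs N om).
  rewrite -ge0_integralD //; try (by move=> om _; exact: ind_ge0);
    try (by move=> om _; rewrite mule_ge0 ?ind_ge0 ?Rs_ge0);
    try (exact: emeasurable_funM).
  apply: eq_integral => om _; rewrite /g /a /ind; case: ifP => _.
  - by rewrite !mul1e.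
  - by rewrite !mul0e adde0.
have eA : \int[P]_om A om + \int[P]_om (a om * Rs N om) = \int[P]_om Q N om.
  rewrite -ge0_integralD //; try (by move=> om _; rewrite mule_ge0 ?ind_ge0 ?Rs_ge0);
    try (exact: emeasurable_funM).
  apply: eq_integral => om _; rewrite /A /a /ind; case: ifPn => h.
  - by rewrite add0e mul1e QE //; exact: alive_mono.
  - by rewrite mul0e adde0.
rewrite eg addeCA eA addeC.
by apply: leeD2r.
Qed.

Lemma tau_bound : (expR b)%:E <= \int[P]_om taubar est p0 X b om.
Proof.
set x := \int[P]_om _.
set c := expR b.
have c0 : (0 < c)%R by exact: expR_gt0.
pose a N := \int[P]_om ind (alive N om).
have ma n : measurable_fun setT (fun om => ind (alive n om)).
  by apply: (Ok_meas_fun (k := n)); exact: mind.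
have a0 N : 0 <= a N by apply: integral_ge0 => om _; exact: ind_ge0.
have a1 N : a N <= 1.
  apply: (@le_trans _ _ (\int[P]_om (cst 1 om))).
    apply: ge0_le_integral => //; try (by move=> om _; exact: ind_ge0);
      try (exact: measurable_cst).
    by move=> om _; rewrite /ind /=; case: ifP => _ //; rewrite lee01.
  by rewrite integral_cst // mul1e; apply: eqle; exact: probability_setT.
have x0 : 0 <= x by apply: integral_ge0 => om _; exact: tau_ge0.
have H1 N : c%:E <= x + c%:E * a N.+1.
  have mQN : measurable_fun setT (Q N).
    by apply: (Ok_meas_fun (k := N)); exact: mQ.
  have e : \int[P]_om (Q N om + c%:E * ind (alive N.+1 om)) =
      \int[P]_om Q N om + c%:E * a N.+1.
    rewrite ge0_integralD //; try (by move=> om _; exact: Q_ge0);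
      try (by move=> om _; rewrite mule_ge0 ?ind_ge0 // lee_fin ltW);
      try (by apply: emeasurable_funM => //; exact: measurable_cst).
    rewrite ge0_integralZl_EFin //; try (exact: ltW); try (by move=> om _; exact: ind_ge0).
  have h : c%:E <= \int[P]_om (Q N om + c%:E * ind (alive N.+1 om)).
    apply: (@le_trans _ _ (\int[P]_om (cst c%:E om))).
      rewrite integral_cst //; apply: eqle.
      by rewrite -[LHS]mule1; congr (_ * _); apply/esym; exact: probability_setT.
    apply: ge0_le_integral => //; try (by move=> om _; rewrite lee_fin ltW);
      try (exact: measurable_cst);
      try (by apply: emeasurable_funD => //; apply: emeasurable_funM => //;
           exact: measurable_cst).
    by move=> om _; exact: P1.
  rewrite e in h; apply: le_trans h _; apply: leeD2r.
  apply: le_trans (EQ N) _.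
  rewrite -ge0_integral_sum //; last first.
    by move=> n om _; exact: ind_ge0.
  by apply: le_int_nm => om; [apply: sume_ge0 => n _; exact: ind_ge0|exact: (P2 N om).1].
have H2 N : (N%:R)%:E * a N <= x.
  rewrite -ge0_integralZl_EFin //; last by move=> om _; exact: ind_ge0.
  apply: le_int_nm => om; last exact: P3.
  by rewrite mule_ge0 ?ind_ge0 // lee_fin.
have afin N : a N = (fine (a N))%:E.
  by rewrite fineK // fin_numElt (lt_le_trans _ (a0 N)) ?ltNyr //= (le_lt_trans (a1 N)) ?ltry.
move: x0 H1 H2; case: x => [r| |] //; last by move=> _ _ _; rewrite leey.
move=> r0 H1 H2.
have key2 N : (N.+1%:R * (c - r) <= c * r)%R.
  have h1 := H1 N; have h2 := H2 N.+1.
  rewrite afin -EFinM -EFinD lee_fin in h1.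
  rewrite afin -EFinM lee_fin in h2.
  have hN : (0 <= N.+1%:R :> R)%R by rewrite ler0n.
  nra.
rewrite lee_fin leNgt; apply/negP => rc.
have crpos : (0 < c - r)%R by rewrite subr_gt0.
have := truncnS_gt (c * r / (c - r)).
rewrite ltr_pdivrMr // => h.
by have := key2 (Num.truncn (c * r / (c - r))); rewrite leNgt h.
Qed.

End main.

Theorem lemma4 (R : realType) (dO : measure_display) (Omega : measurableType dO)
  (P : probability Omega R) (d : nat)
  (mu : {measure set (d.-tuple R) -> \bar R})
  (p0 : d.-tuple R -> R) (X : nat -> Omega -> d.-tuple R)
  (w : nat) (est : w.-tuple (d.-tuple R) -> d.-tuple R -> R) :
  (* observations under P_oo: independent, each with density p0 w.r.t. mu *)
  is_density mu p0 ->
  (forall n, measurable_fun setT (X n)) ->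
  mutually_independent P X [set n | (0 < n)%N] ->
  (forall n A, (0 < n)%N -> measurable A ->
     P (X n @^-1` A) = (\int[mu]_(x in A) (p0 x)%:E)%E) ->
  (* the density estimation procedure (jointly measurable) *)
  (forall s, is_density mu (est s)) ->
  measurable_fun setT (fun z : w.-tuple (d.-tuple R) * d.-tuple R => est z.1 z.2) ->
  (0 < w)%N ->
  (forall b : R, 0 < b ->
     ((expR b)%:E <= E_infty P (taubar est p0 X b))%E) /\
  (forall alpha : R, 0 < alpha < 1 ->
     in_C_alpha P alpha (taubar est p0 X `|ln alpha|)).
Proof.
move=> [mp0 p0_ge0 _] mX indep lawX dest mest w0.
have est_ge0 : forall y x, 0 <= est y x by move=> y x; case: (dest y) => _ h _.
have mesty : forall y, measurable_fun setT (est y) by move=> y; case: (dest y).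
have est_int : forall y, (\int[mu]_x (est y x)%:E = 1)%E.
  by move=> y; case: (dest y).
have TB : forall b, ((expR b)%:E <= E_infty P (taubar est p0 X b))%E.
  by move=> b; apply: tau_bound.
split; first by move=> b _; exact: TB.
move=> alpha /andP[a0 a1]; rewrite /in_C_alpha.
have lna : ln alpha < 0 by rewrite ln_lt0 // a0 a1.
have := TB `|ln alpha|; rewrite ltr0_norm // expRN lnK ?posrE //.
case: (E_infty P _) => [r| |] //=; try (by rewrite leeNy_eq);
  try (by move=> _; rewrite lee_fin ltW).
move=> h; rewrite lee_fin in h.
have r0 : 0 < r by apply: lt_le_trans h; rewrite invr_gt0.
by rewrite inver gt_eqF // lee_fin -[X in _ <= X]invrK lef_pV2 ?posrE ?invr_gt0.
Qed.
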